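(* Let $z_1,z_2\in\mathbb{C}$ with $\mathrm{Im}(z_i)>0$ and $|z_i|\ge 80(2\pi)^2$, and set $L_i^2=\frac{|z_i|^2}{2\mathrm{Im}(z_i)}$, $A_i^2=\frac{|z_i|^2}{2\mathrm{Re}(z_i)}$. Suppose $$\left|\frac{2\pi}{L_1^2}-\frac{2\pi}{L_2^2}\right|\le16(2\pi)^3\left(\frac{1}{L_1^4}+\frac{1}{L_2^4}\right),\qquad \left|\frac{2\pi}{A_1^2}-\frac{2\pi}{A_2^2}\right|\le20(2\pi)^3\left(\frac{1}{L_1^4}+\frac{1}{L_2^4}\right).$$ Then $|z_1-z_2|<560(2\pi)^2\frac{\mathrm{Im}(z_1)}{|z_1|}$.
   Context: Here $\frac{2\pi}{A_i^2}$ is understood as $\frac{4\pi\,\mathrm{Re}(z_i)}{|z_i|^2}$ (so it is defined also when $\mathrm{Re}(z_i)=0$). *)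

(* Defs.v *)
From Stdlib Require Import Reals.
Open Scope R_scope.

Definition Cpx : Type := (R * R)%type.
Definition Re (z : Cpx) : R := fst z.
Definition Im (z : Cpx) : R := snd z.

Definition Cnorm2 (z : Cpx) : R := Re z ^ 2 + Im z ^ 2.
Definition Cnorm (z : Cpx) : R := sqrt (Cnorm2 z).
Definition Csub (z w : Cpx) : Cpx := (Re z - Re w, Im z - Im w).

Definition Lsq (z : Cpx) : R := Cnorm2 z / (2 * Im z).
(* 2 pi / A^2, understood as 4 pi Re z / |z|^2 (defined also when Re z = 0) *)
Definition twopi_over_Asq (z : Cpx) : R := 4 * PI * Re z / Cnorm2 z.

(* Main.v *)
Require Import Defs.
From Stdlib Require Import Reals Lra Psatz.
Open Scope R_scope.

Lemma sqrt_sum_le (u v : R) : sqrt (u^2 + v^2) <= Rabs u + Rabs v.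
Proof.
  rewrite <- (sqrt_pow2 (Rabs u + Rabs v)) by (pose proof (Rabs_pos u); pose proof (Rabs_pos v); lra).
  apply sqrt_le_1_alt.
  pose proof (Rabs_pos u); pose proof (Rabs_pos v).
  replace (u^2) with (Rabs u ^2) by (unfold Rabs; destruct Rcase_abs; ring).
  replace (v^2) with (Rabs v ^2) by (unfold Rabs; destruct Rcase_abs; ring).
  nra.
Qed.

Lemma absle (x y : R) : Rabs x <= y -> -y <= x /\ x <= y.
Proof. unfold Rabs; destruct Rcase_abs; lra. Qed.

Lemma core (c a b p q s2 : R) : 0 < c -> 0 < a -> 0 < b -> 80*c*a <= 1 -> 80*c*b <= 1 ->
  Rabs (a - b) <= 32*c*(a^2+b^2) -> Rabs (p - q) <= 40*c*(a^2+b^2) ->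
  0 < s2 -> s2 * b <= 1 ->
  s2 * sqrt ((p-q)^2 + (a-b)^2) < 560 * c * a.
Proof.
  intros hc ha hb hA hB H1 H2 hs hsb.
  pose proof (sqrt_sum_le (p-q) (a-b)) as HD.
  pose proof H1 as H1'. apply absle in H1. destruct H1 as [H1a H1b].
  assert (h3 : 3*a <= 7*b) by nra.
  assert (h4 : 3*b <= 7*a) by nra.
  assert (hS : 21*(a^2+b^2) <= 58*a*b) by nra.
  assert (hD : sqrt ((p-q)^2 + (a-b)^2) < 560*c*a*b) by
    (assert (c*(21*(a^2+b^2)) <= c*(58*a*b)) by (apply Rmult_le_compat_l; lra);
     assert (0 < c*a*b) by (apply Rmult_lt_0_compat; [apply Rmult_lt_0_compat|]; lra);
     lra).
  pose proof (sqrt_pos ((p-q)^2 + (a-b)^2)).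
  nra.
Qed.

Lemma ybound (x y : R) : 0 < y -> 0 < x^2+y^2 ->
  sqrt (x^2+y^2) * (y/(x^2+y^2)) <= 1 /\ 0 < sqrt (x^2+y^2).
Proof.
  intros hy hN.
  pose proof (sqrt_lt_R0 _ hN) as hs.
  pose proof (sqrt_sqrt (x^2+y^2) (Rlt_le _ _ hN)) as e.
  split; [|exact hs].
  set (s := sqrt (x^2+y^2)) in *.
  assert (y <= s) by nra.
  replace (s * (y/(x^2+y^2))) with (y/s) by (rewrite <- e; field; lra).
  apply Rmult_le_reg_r with s; [lra|]. unfold Rdiv. rewrite Rmult_assoc, Rinv_l; lra.
Qed.

Theorem lemma6p2 (z1 z2 : Cpx) :
  0 < Im z1 -> 0 < Im z2 ->
  80 * (2 * PI) ^ 2 <= Cnorm z1 -> 80 * (2 * PI) ^ 2 <= Cnorm z2 ->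
  Rabs (2 * PI / Lsq z1 - 2 * PI / Lsq z2)
    <= 16 * (2 * PI) ^ 3 * (1 / Lsq z1 ^ 2 + 1 / Lsq z2 ^ 2) ->
  Rabs (twopi_over_Asq z1 - twopi_over_Asq z2)
    <= 20 * (2 * PI) ^ 3 * (1 / Lsq z1 ^ 2 + 1 / Lsq z2 ^ 2) ->
  Cnorm (Csub z1 z2) < 560 * (2 * PI) ^ 2 * (Im z1 / Cnorm z1).
Proof.
  destruct z1 as [x1 y1], z2 as [x2 y2].
  unfold Cnorm, Csub, Lsq, twopi_over_Asq, Cnorm2, Re, Im; cbv [fst snd].
  intros hy1 hy2 hn1 hn2 H1 H2.
  assert (hN1 : 0 < x1^2+y1^2) by nra.
  assert (hN2 : 0 < x2^2+y2^2) by nra.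
  set (N1 := x1^2+y1^2) in *. set (N2 := x2^2+y2^2) in *.
  pose proof PI_RGT_0 as hpi.
  set (c := (2*PI)^2).
  assert (hc : 0 < c) by (unfold c; nra).
  set (a := y1/N1). set (b := y2/N2). set (p := x1/N1). set (q := x2/N2).
  assert (ha : 0 < a) by (unfold a; apply Rdiv_lt_0_compat; lra).
  assert (hb : 0 < b) by (unfold b; apply Rdiv_lt_0_compat; lra).
  assert (e1 : 2*PI/(N1/(2*y1)) - 2*PI/(N2/(2*y2)) = (4*PI)*(a-b)) by (unfold a, b; field; lra).
  assert (e2 : 16 * (2 * PI) ^ 3 * (1 / (N1/(2*y1)) ^ 2 + 1 / (N2/(2*y2)) ^ 2)
     = (4*PI)*(32*c*(a^2+b^2))) by (unfold a, b, c; field; lra).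
  assert (e3 : 20 * (2 * PI) ^ 3 * (1 / (N1/(2*y1)) ^ 2 + 1 / (N2/(2*y2)) ^ 2)
     = (4*PI)*(40*c*(a^2+b^2))) by (unfold a, b, c; field; lra).
  assert (e4 : 4*PI*x1/N1 - 4*PI*x2/N2 = (4*PI)*(p-q)) by (unfold p, q; field; lra).
  rewrite e1, e2 in H1. rewrite e4, e3 in H2.
  rewrite Rabs_mult, (Rabs_pos_eq (4*PI)) in H1, H2 by lra.
  apply Rmult_le_reg_l in H1; [|lra]. apply Rmult_le_reg_l in H2; [|lra].
  destruct (ybound x1 y1 hy1 hN1) as [hb1 hs1].
  destruct (ybound x2 y2 hy2 hN2) as [hb2 hs2].
  fold N1 a in hb1, hs1. fold N2 b in hb2, hs2.
  fold c in hn1, hn2.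
  assert (hA : 80*c*a <= 1) by nra.
  assert (hB : 80*c*b <= 1) by nra.
  pose proof (core c a b p q (sqrt N2) hc ha hb hA hB H1 H2 hs2 hb2) as K.
  assert (eq : (x1 - x2) ^ 2 + (y1 - y2) ^ 2 = N1 * (N2 * ((p-q)^2 + (a-b)^2))).
  { unfold p, q, a, b, N1, N2 in *. field. split; lra. }
  rewrite eq, sqrt_mult_alt by lra.
  rewrite sqrt_mult_alt by lra.
  pose proof (sqrt_sqrt N1 (Rlt_le _ _ hN1)) as eN.
  replace (560 * c * (y1 / sqrt N1)) with (sqrt N1 * (560*c*a)).
  2:{ unfold a. rewrite <- eN at 2. field. lra. }
  apply Rmult_lt_compat_l; [lra|]. exact K.
Qed.
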